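(* For every countably infinite graph $G$ the following are equivalent: (i) for every nontrivial ideal $\mathcal{I}$ on $\mathbb{N}$, $G$ is $\mathcal{I}^+$-Ramsey; (ii) in the Rado coloring of $K_\mathbb{N}$ there is a monochromatic copy of $G$ whose vertex set belongs to $\mathrm{nwd}^+$; (iii) $G$ is finitely ruled, i.e. there is a finite set $S\subseteq V(G)$ such that $G-S$ has no finite dominating set.
   Context: $\mathbb{N}=\{1,2,\dots\}$ and $K_\mathbb{N}$ is the complete graph on $\mathbb{N}$; a copy of $G$ is a subgraph isomorphic to $G$, monochromatic if all its edges have the same color. An ideal on $\mathbb{N}$ is a family $\mathcal{I}$ of subsets closed under subsets and finite unions; it is nontrivial if $\mathbb{N}\notin\mathcal{I}$ and $\mathcal{I}$ contains all finite subsets of $\mathbb{N}$. $\mathcal{I}^+=\mathcal{P}(\mathbb{N})\setminus\mathcal{I}$. $G$ is $\mathcal{I}^+$-Ramsey if for every finite coloring of the edges of $K_\mathbb{N}$ there is a monochromatic copy of $G$ whose vertex set lies in $\mathcal{I}^+$. The Rado coloring $\rho$ assigns to the edge $\{s,t\}$ with $s<t$ the $s$-th bit (counting from the least significant bit, which is the 1st) of the binary expansion of $t$. The truncated binary expansion of $n$ is its binary expansion with the leading 1 removed. For $s,t\in\mathbb{N}$, $t$ extends $s$ if $s\le t$ and the truncated binary expansion of $s$ is a terminal (least-significant) segment of the truncated binary expansion of $t$; $\langle s\rangle$ is the set of $t$ extending $s$. $\mathrm{nwd}$ is the ideal of all $A\subseteq\mathbb{N}$ such that for every $s\in\mathbb{N}$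 there is $t$ extending $s$ with $A\cap\langle t\rangle=\emptyset$, and $\mathrm{nwd}^+=\mathcal{P}(\mathbb{N})\setminus\mathrm{nwd}$. A set $X\subseteq V(G)$ is dominating if every vertex outside $X$ has a neighbor in $X$. *)

(* Defs.v *)
(* The set N = {1,2,...} is represented by Stdlib's [positive]
   (binary, least-significant bit first), so binary expansions are native. *)
From Stdlib Require Import PArith NArith List.
Import ListNotations.
Open Scope positive_scope.

Definition pset := positive -> Prop.

Definition finite_pset (A : pset) : Prop :=
  exists l : list positive, forall x, A x -> In x l.

Definition is_ideal (I : pset -> Prop) : Prop :=
  (forall A B : pset, (forall x, A x -> B x) -> I B -> I A) /\
  (forall A B : pset, I A -> I B -> I (fun x => A x \/ B x)).

Definition nontrivial_ideal (I : pset -> Prop) : Prop :=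
  is_ideal I /\ ~ I (fun _ => True) /\ (forall A, finite_pset A -> I A).

Definition positive_set (I : pset -> Prop) (A : pset) : Prop := ~ I A.

Definition simple_graph {V : Type} (adj : V -> V -> Prop) : Prop :=
  (forall u v, adj u v -> adj v u) /\ (forall v, ~ adj v v).

Definition countably_infinite (V : Type) : Prop :=
  exists e : nat -> V, (forall m n, e m = e n -> m = n) /\ (forall v, exists n, e n = v).

(* A copy of G in K_N is given by an injective map f : V -> N (the subgraph
   with vertex set f(V) and edges {f u, f v} for adj u v).  Its vertex set: *)
Definition vertex_set {V : Type} (f : V -> positive) : pset :=
  fun n => exists v, f v = n.

(* a finite edge colouring of K_N with k colours: a symmetric colour function
   (the value on the diagonal is irrelevant) *)
Definition finite_coloring (k : nat) (c : positive -> positive -> nat) : Prop :=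
  (forall s t, s <> t -> (c s t < k)%nat) /\ (forall s t, c s t = c t s).

Definition mono_copy {V C : Type} (adj : V -> V -> Prop)
    (c : positive -> positive -> C) (f : V -> positive) : Prop :=
  (forall u v, f u = f v -> u = v) /\
  exists col : C, forall u v, adj u v -> c (f u) (f v) = col.

Definition IplusRamsey {V : Type} (adj : V -> V -> Prop) (I : pset -> Prop) : Prop :=
  forall (k : nat) (c : positive -> positive -> nat), finite_coloring k c ->
    exists f : V -> positive, mono_copy adj c f /\ positive_set I (vertex_set f).

(* Rado colouring: for s < t, the s-th bit of t (1st = least significant),
   i.e. bit with index s-1 *)
Definition rado (s t : positive) : bool :=
  if s <? t then Pos.testbit t (Pos.pred_N s)
  else Pos.testbit s (Pos.pred_N t).

Fixpoint trunc_bin (p : positive) : list bool :=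
  match p with
  | xH => []
  | xO q => false :: trunc_bin q
  | xI q => true :: trunc_bin q
  end.

Definition extends (s t : positive) : Prop :=
  s <= t /\ exists l, trunc_bin t = trunc_bin s ++ l.

Definition cone (s : positive) : pset := fun t => extends s t.

Definition nwd (A : pset) : Prop :=
  forall s, exists t, extends s t /\ (forall x, A x -> cone t x -> False).

Definition nwd_plus (A : pset) : Prop := ~ nwd A.

Definition finitely_ruled {V : Type} (adj : V -> V -> Prop) : Prop :=
  exists S : list V,
    forall X : list V, (forall x, In x X -> ~ In x S) ->
      exists v, ~ In v S /\ ~ In v X /\ (forall x, In x X -> ~ adj v x).

(* Main.v *)
Require Import Defs.
From Stdlib Require Import PArith NArith Arith List Lia Classical ClassicalEpsilon.
Import ListNotations.

Module UF.
From mathcomp Require Import all_boot.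
From mathcomp Require Import boolp classical_sets filter.

Lemma ultra_exists (I : pset -> Prop) : nontrivial_ideal I ->
  exists U : pset -> Prop,
    (forall A B : pset, U A -> U B -> U (fun x => A x /\ B x)) /\
    (forall A B : pset, (forall x, A x -> B x) -> U A -> U B) /\
    ~ U (fun _ => False) /\
    (forall A : pset, U A \/ U (fun x => ~ A x)) /\
    (forall A : pset, I A -> U (fun x => ~ A x)).
Proof.
move=> [[Isub Iun] [INT Ifin]].
pose F : set_system positive := fun A => I (fun x => ~ A x).
have FF : ProperFilter F.
  apply: Build_ProperFilter.
  - move=> /= H; apply: INT; apply: Isub H => x _ Hx; exact: Hx.
  - split.
    + apply: Ifin; exists nil => x /= H; apply: H; done.
    + move=> A B HA HB; apply: Isub (Iun _ _ HA HB) => x /= H.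
      have [Ax|Ax] := pselect (A x); last by left.
      right => Bx; exact: H.
    + move=> P Q PQ HP; apply: Isub HP => x Qx Px; exact/Qx/PQ.
have [G [GU FG]] := ultraFilterLemma FF.
exists G; split; [|split; [|split; [|split]]].
- move=> A B HA HB; exact: (filterI HA HB).
- move=> A B AB HA; exact: (filterS AB HA).
- move=> H; have GP : ProperFilter G by case: GU.
  exact: (@filter_not_empty _ G GP).
- move=> A; exact: (in_ultra_setVsetC A GU).
- move=> A IA; apply: FG; rewrite /F; apply: Isub IA => x H; by apply: contrapT.
Qed.
End UF.
Local Open Scope nat_scope.

Definition eps {T : Type} (d : T) (P : T -> Prop) : T :=
  match excluded_middle_informative (exists x, P x) with
  | left H => proj1_sig (constructive_indefinite_description _ H)
  | right _ => d
  end.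

Lemma eps_spec {T : Type} (d : T) (P : T -> Prop) : (exists x, P x) -> P (eps d P).
Proof.
  intros H. unfold eps. destruct (excluded_middle_informative _) as [H'|H'].
  - exact (proj2_sig (constructive_indefinite_description _ H')).
  - contradiction.
Qed.

Section Construct.
Variable V : Type.
Variable adj : V -> V -> Prop.
Hypothesis Hsym : forall u v, adj u v -> adj v u.
Hypothesis Hirr : forall v, ~ adj v v.
Variable e : nat -> V.
Hypothesis He : forall v, exists n, e n = v.
Variable Sv : list V.
Hypothesis HS : forall X : list V, (forall x, In x X -> ~ In x Sv) ->
      exists v, ~ In v Sv /\ ~ In v X /\ (forall x, In x X -> ~ adj v x).
Variable U : pset -> Prop.
Hypothesis UI : forall A B : pset, U A -> U B -> U (fun x => A x /\ B x).
Hypothesis US : forall A B : pset, (forall x, A x -> B x) -> U A -> U B.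
Hypothesis U0 : ~ U (fun _ => False).
Hypothesis Ucof : forall n, U (fun m => m <> n).
Variable c : positive -> positive -> nat.
Hypothesis hc : forall s t, c s t = c t s.
Variable i0 : nat.
Variable A : pset.
Hypothesis HA : U A.
Hypothesis HAcol : forall n, A n -> U (fun m => c n m = i0).

Definition lst := list (V * positive).
Definition dom (L : lst) v := exists m, In (v, m) L.
Definition img (L : lst) m := exists v, In (v, m) L.

Definition Inv (L : lst) : Prop :=
  (forall u m v n, In (u, m) L -> In (v, n) L -> (u = v <-> m = n)) /\
  (forall u m, In (u, m) L -> A m) /\
  (forall u m v n, In (u, m) L -> In (v, n) L -> adj u v -> c m n = i0).

Lemma U_nonempty (P : pset) : U P -> exists x, P x.
Proof.
  intros HP. apply NNPP. intros H. apply U0.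
  apply (US P); auto. intros x Px. apply H. eauto.
Qed.

Definition goodA (L : lst) m := A m /\ forall u n, In (u, n) L -> n <> m /\ c n m = i0.

Lemma goodA_U L : (forall u m, In (u, m) L -> A m) -> U (goodA L).
Proof.
  induction L as [|[u n] L IH]; intros HL.
  - apply (US A); auto. intros x Ax. split; auto. intros u n [].
  - assert (An : A n) by (apply (HL u); left; auto).
    assert (H1 := UI _ _ (IH (fun u' m' H => HL u' m' (or_intror H)))
                     (UI _ _ (Ucof n) (HAcol n An))).
    apply (US _ _ ) with (2 := H1). intros x [[Ax Hx] [Hn Hc]]. split; auto.
    intros u' n' [E|E].
    + inversion E; subst. split; auto.
    + eauto.
Qed.

Definition stepA (L : lst) (w : V) : lst :=
  if excluded_middle_informative (dom L w) then L
  else L ++ [(w, eps 1%positive (goodA L))].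

Lemma stepA_incl L w p : In p L -> In p (stepA L w).
Proof. intros H. unfold stepA. destruct (excluded_middle_informative _); auto.
  apply in_or_app; auto. Qed.

Lemma stepA_dom L w : dom (stepA L w) w.
Proof. unfold stepA. destruct (excluded_middle_informative _); auto.
  eexists. apply in_or_app. right. left. reflexivity. Qed.

Lemma Inv_add L w m :
  Inv L -> ~ dom L w -> ~ img L m -> A m ->
  (forall u n, In (u, n) L -> adj u w -> c n m = i0) ->
  Inv (L ++ [(w, m)]).
Proof.
  intros [H1 [H2 H3]] Hw Hm Am Hadj. split; [|split].
  - intros u m1 v n1 I1 I2. apply in_app_or in I1, I2.
    destruct I1 as [I1|[E1|[]]]; destruct I2 as [I2|[E2|[]]].
    + eauto.
    + inversion E2; subst. split; intros E.
      * exfalso; apply Hw; subst; exists m1; exact I1.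
      * exfalso; apply Hm; subst; exists u; exact I1.
    + inversion E1; subst. split; intros E.
      * exfalso; apply Hw; subst; exists n1; exact I2.
      * exfalso; apply Hm; subst; exists v; exact I2.
    + inversion E1; inversion E2; subst. tauto.
  - intros u m1 I1. apply in_app_or in I1. destruct I1 as [I1|[E1|[]]]; eauto.
    inversion E1; subst; auto.
  - intros u m1 v n1 I1 I2 Ha. apply in_app_or in I1, I2.
    destruct I1 as [I1|[E1|[]]]; destruct I2 as [I2|[E2|[]]].
    + eauto.
    + inversion E2; subst. eauto.
    + inversion E1; subst. rewrite hc. eauto.
    + inversion E1; inversion E2; subst. exfalso; eapply Hirr; eauto.
Qed.

Lemma stepA_inv L w : Inv L -> Inv (stepA L w).
Proof.
  intros HL. unfold stepA. destruct (excluded_middle_informative _) as [_|Hd]; auto.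
  assert (G : goodA L (eps 1%positive (goodA L))).
  { apply eps_spec. apply U_nonempty. apply goodA_U. apply HL. }
  destruct G as [Am Hm].
  apply Inv_add; auto.
  - intros [v Hv]. destruct (Hm _ _ Hv). auto.
  - intros u n Hn _. apply (Hm u n Hn).
Qed.


Definition L0 : lst := fold_left stepA Sv [].

Lemma fold_props : forall l L, Inv L ->
  Inv (fold_left stepA l L) /\ (forall p, In p L -> In p (fold_left stepA l L)) /\
  (forall s, In s l -> dom (fold_left stepA l L) s).
Proof.
  induction l as [|a l IH]; intros L HL; simpl.
  - split; auto. split; auto. intros s [].
  - destruct (IH (stepA L a) (stepA_inv L a HL)) as [H1 [H2 H3]].
    split; auto. split.
    + intros p Hp. apply H2. apply stepA_incl; auto.
    + intros s [E|Hs]; auto. subst. destruct (stepA_dom L s) as [m Hm].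
      exists m. auto.
Qed.

Lemma L0_inv : Inv L0.
Proof. apply fold_props. split; [|split]; intros; simpl in *; tauto. Qed.

Lemma L0_Sv s : In s Sv -> dom L0 s.
Proof. apply fold_props. split; [|split]; intros; simpl in *; tauto. Qed.

Definition B (n : positive) := A n /\ forall u m, In (u, m) L0 -> c m n = i0.

Lemma UB : U B.
Proof.
  assert (G : forall L : lst, (forall u m, In (u, m) L -> A m) ->
     U (fun n => A n /\ forall u m, In (u, m) L -> c m n = i0)).
  { induction L as [|[u n] L IH]; intros HL.
    - apply (US A); auto. intros x Ax. split; auto. intros u n [].
    - assert (An : A n) by (apply (HL u); left; auto).
      assert (H1 := UI _ _ (IH (fun u' m' H => HL u' m' (or_intror H))) (HAcol n An)).
      apply (US _ _ ) with (2 := H1). intros x [[Ax Hx] Hc]. split; auto.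
      intros u' n' [E|E].
      + inversion E; subst. auto.
      + eauto. }
  apply G. apply L0_inv.
Qed.

Definition goodB (L : lst) v :=
  ~ dom L v /\ ~ In v Sv /\ forall u m, In (u, m) L -> ~ In u Sv -> ~ adj v u.

Lemma goodB_ex L : exists v, goodB L v.
Proof.
  assert (HX : exists X, forall x, In x X <-> (dom L x /\ ~ In x Sv)).
  { induction L as [|[u m] L IH].
    - exists []. intros x; split; [intros []|intros [[m Hm] _]; destruct Hm].
    - destruct IH as [X HX]. destruct (classic (In u Sv)) as [Hu|Hu].
      + exists X. intros x. rewrite HX. split.
        * intros [[m' Hm'] Hx]. split; auto. exists m'; right; auto.
        * intros [[m' [E|Hm']] Hx]. { inversion E; subst; contradiction. }
          split; auto. exists m'; auto.
      + exists (u :: X). intros x. simpl. rewrite HX. split.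
        * intros [E|[[m' Hm'] Hx]]. { subst. split; auto. exists m; left; auto. }
          split; auto. exists m'; right; auto.
        * intros [[m' [E|Hm']] Hx]. { inversion E; subst; auto. }
          right. split; auto. exists m'; auto. }
  destruct HX as [X HX].
  destruct (HS X) as [v [H1 [H2 H3]]].
  { intros x Hx. apply HX in Hx. tauto. }
  exists v. split; [|split]; auto.
  - intros Hd. apply H2. apply HX. auto.
  - intros u m Hu HuS. apply H3. apply HX. split; auto. exists m; auto.
Qed.

Definition stepB (L : lst) (n : positive) : lst :=
  if excluded_middle_informative (B n /\ ~ img L n)
  then L ++ [(eps (e 0) (goodB L), n)] else L.

Lemma stepB_incl L n p : In p L -> In p (stepB L n).
Proof. intros H. unfold stepB. destruct (excluded_middle_informative _); auto.
  apply in_or_app; auto. Qed.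

Lemma stepB_img L n : B n -> img (stepB L n) n.
Proof. intros Bn. unfold stepB. destruct (excluded_middle_informative _) as [_|H].
  - eexists. apply in_or_app. right. left. reflexivity.
  - apply NNPP. intros H'. apply H. auto. Qed.

Lemma stepB_inv L n : Inv L -> (forall p, In p L0 -> In p L) -> Inv (stepB L n).
Proof.
  intros HL Hincl. unfold stepB. destruct (excluded_middle_informative _) as [[Bn Hn]|_]; auto.
  pose proof (eps_spec (e 0) (goodB L) (goodB_ex L)) as [G1 [G2 G3]].
  apply Inv_add; auto.
  - apply Bn.
  - intros u m Hum Ha. destruct (classic (In u Sv)) as [HuS|HuS].
    + destruct (L0_Sv u HuS) as [m0 Hm0].
      assert (E : m0 = m). { apply (proj1 HL u m0 u m); auto. }
      subst m0. apply (proj2 Bn u). auto.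
    + exfalso. apply (G3 u m Hum HuS). apply Hsym. auto.
Qed.

Fixpoint Lseq (j : nat) : lst :=
  match j with
  | 0 => L0
  | S j => stepB (stepA (Lseq j) (e j)) (Pos.of_succ_nat j)
  end.

Lemma Lseq_inv j : Inv (Lseq j) /\ (forall p, In p L0 -> In p (Lseq j)).
Proof.
  induction j as [|j [IH1 IH2]]; simpl.
  - split; auto. apply L0_inv.
  - split.
    + apply stepB_inv. apply stepA_inv; auto. intros p Hp. apply stepA_incl; auto.
    + intros p Hp. apply stepB_incl. apply stepA_incl; auto.
Qed.

Lemma Lseq_mono j j' p : j <= j' -> In p (Lseq j) -> In p (Lseq j').
Proof.
  intros Hj. induction Hj; auto. intros Hp. simpl. apply stepB_incl. apply stepA_incl. auto.
Qed.

Definition jv (v : V) : nat := proj1_sig (constructive_indefinite_description _ (He v)).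
Lemma jv_spec v : e (jv v) = v.
Proof. exact (proj2_sig (constructive_indefinite_description _ (He v))). Qed.

Definition fmap (v : V) : positive := eps 1%positive (fun m => In (v, m) (Lseq (S (jv v)))).

Lemma fmap_in v : In (v, fmap v) (Lseq (S (jv v))).
Proof.
  unfold fmap. apply eps_spec. simpl. destruct (stepA_dom (Lseq (jv v)) (e (jv v))) as [m Hm].
  exists m. rewrite jv_spec in Hm. rewrite jv_spec. apply stepB_incl. exact Hm.
Qed.

Lemma fmap_ex v : exists j, In (v, fmap v) (Lseq j).
Proof. eexists. apply fmap_in. Qed.

Lemma common u m v n : (exists j, In (u, m) (Lseq j)) -> (exists j, In (v, n) (Lseq j)) ->
  exists j, In (u, m) (Lseq j) /\ In (v, n) (Lseq j).
Proof.
  intros [j1 H1] [j2 H2]. exists (max j1 j2). split; [apply (Lseq_mono j1)|apply (Lseq_mono j2)]; auto; lia.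
Qed.

Lemma fmap_inj u v : fmap u = fmap v -> u = v.
Proof.
  intros E. destruct (common _ _ _ _ (fmap_ex u) (fmap_ex v)) as [j [H1 H2]].
  apply (proj1 (proj1 (Lseq_inv j)) _ _ _ _ H1 H2). auto.
Qed.

Lemma fmap_mono u v : adj u v -> c (fmap u) (fmap v) = i0.
Proof.
  intros Ha. destruct (common _ _ _ _ (fmap_ex u) (fmap_ex v)) as [j [H1 H2]].
  apply (proj2 (proj2 (proj1 (Lseq_inv j))) _ _ _ _ H1 H2 Ha).
Qed.

Lemma fmap_B n : B n -> exists v, fmap v = n.
Proof.
  intros Bn. set (j := Nat.pred (Pos.to_nat n)).
  assert (Ej : Pos.of_succ_nat j = n).
  { unfold j. apply Pos2Nat.inj. rewrite SuccNat2Pos.id_succ. lia. }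
  destruct (stepB_img (stepA (Lseq j) (e j)) (Pos.of_succ_nat j)) as [v Hv].
  { rewrite Ej; auto. }
  exists v. rewrite <- Ej. change (In (v, Pos.of_succ_nat j) (Lseq (S j))) in Hv.
  destruct (common _ _ _ _ (fmap_ex v) (ex_intro _ (S j) Hv)) as [k [H1 H2]].
  apply (proj1 (proj1 (Lseq_inv k)) _ _ _ _ H1 H2). auto.
Qed.

End Construct.

Lemma iii_i (V : Type) (adj : V -> V -> Prop) :
  simple_graph adj -> countably_infinite V -> finitely_ruled adj ->
  forall I : pset -> Prop, nontrivial_ideal I -> IplusRamsey adj I.
Proof.
  intros [Hsym Hirr] [e [_ He]] [Sv HS] I HI k c [Hck Hcs].
  destruct (UF.ultra_exists I HI) as [U [UI [US [U0 [Uult UIc]]]]].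
  destruct HI as [_ [_ Ifin]].
  assert (Ucof : forall n, U (fun m => m <> n)).
  { intros n. apply UIc. apply Ifin. exists [n]. intros x Hx. left; auto. }
  assert (Usplit : forall k (P : nat -> pset) (Q : pset), U Q ->
            (forall m, Q m -> exists i, i < k /\ P i m) -> exists i, i < k /\ U (P i)).
  { induction k0 as [|k0 IH]; intros P Q HQ HP.
    - exfalso. apply U0. apply (US Q); auto. intros m Qm. destruct (HP m Qm) as [i [Hi _]]. lia.
    - destruct (Uult (P k0)) as [H|H].
      + exists k0. split; auto.
      + destruct (IH P _ (UI _ _ HQ H)) as [i [Hi Ui]].
        * intros m [Qm Hm]. destruct (HP m Qm) as [i [Hi Pi]].
          exists i. split; auto. destruct (classic (i = k0)); [subst; contradiction|lia].
        * exists i. split; auto. }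
  set (colf := fun n => eps 0 (fun i => i < k /\ U (fun m => c n m = i))).
  assert (colf_spec : forall n, colf n < k /\ U (fun m => c n m = colf n)).
  { intros n. apply (eps_spec 0 (fun i => i < k /\ U (fun m => c n m = i))).
    apply (Usplit k (fun i m => c n m = i) (fun m => m <> n) (Ucof n)).
    intros m Hm. exists (c n m). split; [apply Hck; auto|reflexivity]. }
  destruct (Usplit k (fun i n => colf n = i) (fun n => n <> 1%positive) (Ucof 1%positive))
    as [i0 [_ HA]].
  { intros m _. exists (colf m). split; auto. apply colf_spec. }
  set (A := fun n => colf n = i0).
  assert (HAcol : forall n, A n -> U (fun m => c n m = i0)).
  { intros n An. unfold A in An. rewrite <- An. apply colf_spec. }
  exists (fmap V adj e He Sv c i0 A). split.
  - split.
    + exact (fmap_inj V adj Hsym Hirr e He Sv HS U UI US U0 Ucof c Hcs i0 A HA HAcol).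
    + exists i0. exact (fmap_mono V adj Hsym Hirr e He Sv HS U UI US U0 Ucof c Hcs i0 A HA HAcol).
  - intros HIf. apply UIc in HIf. apply U0.
    apply (US _ _ ) with (2 := UI _ _ HIf (UB V adj Hsym Hirr Sv U UI US U0 Ucof c Hcs i0 A HA HAcol)).
    intros x [H1 H2]. apply H1.
    exact (fmap_B V adj Hsym Hirr e He Sv HS U UI US U0 Ucof c Hcs i0 A HA HAcol x H2).
Qed.

Fixpoint of_bits (l : list bool) : positive :=
  match l with
  | [] => xH
  | false :: l => xO (of_bits l)
  | true :: l => xI (of_bits l)
  end.

Lemma trunc_of_bits l : trunc_bin (of_bits l) = l.
Proof. induction l as [|[|] l IH]; simpl; congruence. Qed.

Lemma prefix_le : forall s t l, trunc_bin t = trunc_bin s ++ l -> (s <= t)%positive.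
Proof.
  induction s as [s IH|s IH|]; intros t l H.
  - destruct t as [t|t|]; simpl in H; try discriminate. injection H as H.
    apply IH in H. lia.
  - destruct t as [t|t|]; simpl in H; try discriminate. injection H as H.
    apply IH in H. lia.
  - lia.
Qed.

Lemma extends_iff s t : extends s t <-> exists l, trunc_bin t = trunc_bin s ++ l.
Proof.
  split; [intros [_ H]; exact H|]. intros [l H]. split; [eapply prefix_le; eauto|eauto].
Qed.

Lemma extends_refl s : extends s s.
Proof. apply extends_iff. exists []. rewrite app_nil_r. auto. Qed.

Lemma extends_trans s t u : extends s t -> extends t u -> extends s u.
Proof.
  rewrite !extends_iff. intros [l1 H1] [l2 H2]. exists (l1 ++ l2).
  rewrite H2, H1, app_assoc. auto.
Qed.

Lemma len_bound p : S (length (trunc_bin p)) <= Pos.to_nat p.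
Proof. induction p; simpl; lia. Qed.

Lemma pred_N_ofs i : Pos.pred_N (Pos.of_succ_nat i) = N.of_nat i.
Proof. destruct i; simpl; [reflexivity|rewrite Pos.pred_N_succ; reflexivity]. Qed.

Lemma testbit_nth : forall n i, i < length (trunc_bin n) ->
  Pos.testbit n (N.of_nat i) = nth i (trunc_bin n) false.
Proof.
  induction n as [n IH|n IH|]; intros i Hi; simpl in Hi; try lia.
  - destruct i as [|i]; simpl; auto.
    rewrite <- IH by lia. f_equal. apply pred_N_ofs.
  - destruct i as [|i]; simpl; auto.
    rewrite <- IH by lia. f_equal. apply pred_N_ofs.
Qed.

Lemma rado_sym s t : rado s t = rado t s.
Proof.
  unfold rado. destruct (Pos.ltb_spec s t); destruct (Pos.ltb_spec t s); auto; try lia.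
  assert (s = t) by lia. subst; auto.
Qed.

Lemma rado_gt s t : (t < s)%positive -> rado s t = Pos.testbit s (Pos.pred_N t).
Proof. intros H. unfold rado. destruct (Pos.ltb_spec s t); auto; lia. Qed.

Lemma sum_bound {T : Type} (g : T -> nat) x l : In x l -> g x <= list_sum (map g l).
Proof. induction l as [|a l IH]; simpl; [tauto|]. intros [E|H]; [subst; lia|]. specialize (IH H). lia. Qed.

Lemma nwd_ideal : nontrivial_ideal nwd.
Proof.
  split; [split|split].
  - intros A B HAB HB s. destruct (HB s) as [t [Ht D]]. exists t. split; auto.
    intros x Ax. apply D. auto.
  - intros A B HA HB s. destruct (HA s) as [t1 [H1 D1]]. destruct (HB t1) as [t2 [H2 D2]].
    exists t2. split; [eapply extends_trans; eauto|].
    intros x [Ax|Bx] Cx.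
    + apply (D1 x Ax). unfold cone in *. eapply extends_trans; eauto.
    + apply (D2 x Bx Cx).
  - intros H. destruct (H 1%positive) as [t [_ D]]. apply (D t I (extends_refl t)).
  - intros A [l Hl] s. set (b := list_sum (map Pos.to_nat l)).
    exists (of_bits (trunc_bin s ++ repeat false b)). split.
    + apply extends_iff. exists (repeat false b). apply trunc_of_bits.
    + intros x Ax [Hle _]. apply Hl in Ax. apply (sum_bound Pos.to_nat) in Ax. fold b in Ax.
      pose proof (len_bound (of_bits (trunc_bin s ++ repeat false b))) as H.
      rewrite trunc_of_bits, length_app, repeat_length in H.
      apply Pos2Nat.inj_le in Hle. lia.
Qed.

Lemma i_ii (V : Type) (adj : V -> V -> Prop) :
  (forall I : pset -> Prop, nontrivial_ideal I -> IplusRamsey adj I) ->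
  exists f : V -> positive, mono_copy adj rado f /\ nwd_plus (vertex_set f).
Proof.
  intros H.
  destruct (H nwd nwd_ideal 2 (fun s t => if rado s t then 1 else 0)) as [f [[Hinj [col Hcol]] Hpos]].
  - split.
    + intros s t _. destruct (rado s t); lia.
    + intros s t. rewrite rado_sym. auto.
  - exists f. split; [|exact Hpos]. split; auto. exists (Nat.eqb col 1).
    intros u v Ha. specialize (Hcol u v Ha). simpl in Hcol.
    destruct (rado (f u) (f v)); subst col; reflexivity.
Qed.

Lemma low_list {V : Type} (f : V -> positive) : (forall u v, f u = f v -> u = v) ->
  forall b, exists l, forall v, In v l <-> Pos.to_nat (f v) <= b.
Proof.
  intros Hinj. induction b as [|b [l Hl]].
  - exists []. intros v. simpl. pose proof (Pos2Nat.is_pos (f v)). split; [tauto|lia].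
  - destruct (classic (exists v, Pos.to_nat (f v) = S b)) as [[w Hw]|Hn].
    + exists (w :: l). intros v. simpl. rewrite Hl. split.
      * intros [E|E]; [subst; lia|lia].
      * intros Hv. destruct (Nat.eq_dec (Pos.to_nat (f v)) (S b)) as [E|E]; [|right; lia].
        left. apply Hinj. apply Pos2Nat.inj. congruence.
    + exists l. intros v. rewrite Hl. split; [lia|]. intros Hv.
      destruct (Nat.eq_dec (Pos.to_nat (f v)) (S b)) as [E|E]; [|lia].
      exfalso. apply Hn. eauto.
Qed.

Lemma pred_N_to_nat p : Pos.pred_N p = N.of_nat (Pos.to_nat p - 1).
Proof.
  rewrite <- pred_N_ofs. f_equal. apply Pos2Nat.inj. rewrite SuccNat2Pos.id_succ.
  pose proof (Pos2Nat.is_pos p). lia.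
Qed.

Lemma ii_iii (V : Type) (adj : V -> V -> Prop) :
  (exists f : V -> positive, mono_copy adj rado f /\ nwd_plus (vertex_set f)) ->
  finitely_ruled adj.
Proof.
  intros [f [[Hinj [col Hcol]] Hpos]].
  assert (Hs : exists s, forall t, extends s t -> exists x, vertex_set f x /\ cone t x).
  { apply NNPP. intros Hn. apply Hpos. intros s. apply NNPP. intros Ht.
    apply Hn. exists s. intros t Est. apply NNPP. intros Hx. apply Ht. exists t. split; auto.
    intros x Ax Cx. apply Hx. eauto. }
  destruct Hs as [s Hs].
  set (L := length (trunc_bin s)).
  destruct (low_list f Hinj (S L)) as [Sv HSv].
  exists Sv. intros X HX.
  set (M := list_sum (map (fun x => Pos.to_nat (f x)) X)).
  set (t0 := of_bits (trunc_bin s ++ repeat (negb col) (S M))).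
  destruct (Hs t0) as [n [[v Ev] Cn]].
  { apply extends_iff. exists (repeat (negb col) (S M)). apply trunc_of_bits. }
  subst n. apply extends_iff in Cn. destruct Cn as [l' Hl'].
  unfold t0 in Hl'. rewrite trunc_of_bits, <- app_assoc in Hl'.
  pose proof (len_bound (f v)) as Hlen. rewrite Hl', !length_app, repeat_length in Hlen.
  fold L in Hlen.
  exists v. split; [|split].
  - rewrite HSv. intros Hc. lia.
  - intros Hv. pose proof (sum_bound (fun x => Pos.to_nat (f x)) v X Hv). cbv beta in H. fold M in H. lia.
  - intros x Hx Ha. specialize (Hcol v x Ha).
    pose proof (sum_bound (fun x => Pos.to_nat (f x)) x X Hx) as Hxb. fold M in Hxb. simpl in Hxb.
    assert (HxS : ~ In x Sv) by (apply HX; auto). rewrite HSv in HxS.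
    rewrite rado_gt in Hcol by (apply Pos2Nat.inj_lt; lia).
    rewrite pred_N_to_nat in Hcol. rewrite testbit_nth in Hcol.
    2:{ rewrite Hl', !length_app, repeat_length. fold L. lia. }
    rewrite Hl', app_nth2 in Hcol by (fold L; lia). fold L in Hcol.
    rewrite app_nth1 in Hcol by (rewrite repeat_length; lia).
    rewrite (nth_indep _ _ (negb col)) in Hcol by (rewrite repeat_length; lia).
    rewrite nth_repeat in Hcol. destruct col; discriminate.
Qed.

Theorem mainTheorem16 (V : Type) (adj : V -> V -> Prop) :
  simple_graph adj -> countably_infinite V ->
  ((forall I : pset -> Prop, nontrivial_ideal I -> IplusRamsey adj I) <->
   (exists f : V -> positive, mono_copy adj rado f /\ nwd_plus (vertex_set f))) /\
  ((exists f : V -> positive, mono_copy adj rado f /\ nwd_plus (vertex_set f)) <->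
   finitely_ruled adj).
Proof.
  intros Hg Hc. split; split.
  - apply i_ii.
  - intros H I HI. apply iii_i; auto. apply ii_iii; auto.
  - apply ii_iii.
  - intros H. apply i_ii. intros I HI. apply iii_i; auto.
Qed.
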